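(* Let $q\ge 2$, $n\ge1$, $d_X\ge1$, $d_Z\ge 1$ be integers, and let $C\subseteq\{0,1,\dots,q-1\}^n$ be a classical code with minimum Hamming distance at least $d_X$ and with $|C|\ge 2V_q(d_Z-1)$. Enumerate $C=\{{\bf c}_1,\dots,{\bf c}_m\}$ and let $A$ be the real matrix with $m$ columns whose rows are: one row of all ones; and, for each ${\bf z}\in\{0,\dots,q-1\}^n$ with $1\le\mathrm{wt}({\bf z})\le d_Z-1$, the two rows with $k$-th entries $\cos(2\pi\,{\bf z}^T{\bf c}_k/q)$ and $\sin(2\pi\,{\bf z}^T{\bf c}_k/q)$. Then $A$ has a nonzero real kernel vector, and for every nonzero ${\bf x}\in\ker(A)\subseteq\mathbb{R}^m$, setting $x_k^+=\max\{x_k,0\}$, $x_k^-=\max\{-x_k,0\}$, $x=\sum_k x_k^+$ and $$|0_L\rangle=\frac{1}{\sqrt{x}}\sum_{k=1}^m\sqrt{x_k^+}\,|{\bf c}_k\rangle,\qquad |1_L\rangle=\frac{1}{\sqrt{x}}\sum_{k=1}^m\sqrt{x_k^-}\,|{\bf c}_k\rangle,$$ the span of $|0_L\rangle,|1_L\rangle$ is a quantum code encoding one logical qubit with bit-flip distance $d_X$ and phase-flip distance $d_Z$; that is, $|0_L\rangle,|1_L\rangle$ are orthonormal, supported on disjoint subsets of $C$, and for every generalized Pauli operator $P=X^{\bf a}Z^{\bf b}$ with $\mathrm{wt}({\bf a})\le d_X-1$ and $\mathrm{wt}({\bf b})\le d_Z-1$ there is a constant $c_P\in\mathbb{C}$ with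 $\langle i_L|P|j_L\rangle=c_P\,\delta_{ij}$ for all $i,j\in\{0,1\}$.
   Context: Let $\omega=e^{2\pi i/q}$. On $\mathbb{C}^q$ with orthonormal basis $|0\rangle,\dots,|q-1\rangle$, $Z=\sum_{j=0}^{q-1}\omega^j|j\rangle\langle j|$ and $X=\sum_{j\in\mathbb{Z}_q}|j\rangle\langle j+1|$ (indices mod $q$). For ${\bf a},{\bf b}\in\{0,\dots,q-1\}^n$, $X^{\bf a}Z^{\bf b}=\bigotimes_{i=1}^n X^{a_i}Z^{b_i}$; $\mathrm{wt}$ denotes Hamming weight. For ${\bf c}\in\{0,\dots,q-1\}^n$, $|{\bf c}\rangle=|c_1\rangle\otimes\cdots\otimes|c_n\rangle$ and ${\bf z}^T{\bf c}=\sum_iz_ic_i$. $V_q(r)=\sum_{w=0}^r\binom{n}{w}(q-1)^w$ is the volume of the $q$-ary Hamming ball of radius $r$. *)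

(* Defs.v *)
From mathcomp Require Import all_boot all_order all_algebra.
From mathcomp Require Import reals trigo.
From mathcomp Require Import complex.
Set Implicit Arguments. Unset Strict Implicit. Unset Printing Implicit Defensive.
Import Order.TTheory GRing.Theory Num.Theory.
Local Open Scope ring_scope.
Local Open Scope complex_scope.

Definition word (q n : nat) := {ffun 'I_n -> 'I_q}.

Definition wt q n (z : word q n) : nat := #|[set i | val (z i) != 0%N]|.
Definition hdist q n (u v : word q n) : nat := #|[set i | u i != v i]|.

Definition Vq (q n r : nat) : nat := (\sum_(w < r.+1) 'C(n, w) * (q - 1) ^ w)%N.

Definition dotw q n (z c : word q n) : nat := (\sum_(i < n) val (z i) * val (c i))%N.

(* Row labels of A: None = the all-ones row; Some (z, false) = cos row;
   Some (z, true) = sin row, for 1 <= wt z <= dZ - 1. *)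
Definition rowlab q n := option (word q n * bool).

Definition rowsA q n (dZ : nat) : {set rowlab q n} :=
  [set r : rowlab q n | match r with
                        | None => true
                        | Some (z, _) => (1 <= wt z <= dZ - 1)%N
                        end].

Definition Aentry (R : realType) q n m (c : 'I_m -> word q n)
  (r : rowlab q n) (k : 'I_m) : R :=
  match r with
  | None => 1
  | Some (z, false) => cos (2 * pi * (dotw z (c k))%:R / q%:R)
  | Some (z, true) => sin (2 * pi * (dotw z (c k))%:R / q%:R)
  end.

Definition Amx (R : realType) q n (dZ m : nat) (c : 'I_m -> word q n)
  : 'M[R]_(#|rowsA q n dZ|, m) :=
  \matrix_(i < #|rowsA q n dZ|, k < m)
     Aentry R c (@enum_val _ (mem (rowsA q n dZ)) i) k.

Definition xpos (R : realType) m (x : 'cV[R]_m) (k : 'I_m) : R := Num.max (x k 0) 0.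
Definition xneg (R : realType) m (x : 'cV[R]_m) (k : 'I_m) : R := Num.max (- x k 0) 0.
Definition xsum (R : realType) m (x : 'cV[R]_m) : R := \sum_k xpos x k.

(* logical states |0_L> (b = false) and |1_L> (b = true), as vectors in
   C^{q^n} given by their coordinates in the basis |w>, w a word *)
Definition ketL (R : realType) q n m (c : 'I_m -> word q n) (x : 'cV[R]_m)
  (b : bool) : word q n -> R[i] :=
  fun w => \sum_(k < m) (c k == w)%:R *
     ((Num.sqrt (if b then xneg x k else xpos x k) / Num.sqrt (xsum x))%:C).

Definition omega (R : realType) (q : nat) : R[i] :=
  cos (2 * pi / q%:R) +i* sin (2 * pi / q%:R).

Definition Xq (R : realType) (q : nat) : 'M[R[i]]_q :=
  \matrix_(i < q, j < q) (val j == ((val i).+1 %% q)%N)%:R.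
Definition Zq (R : realType) (q : nat) : 'M[R[i]]_q :=
  \matrix_(i < q, j < q) ((i == j)%:R * omega R q ^+ val i).

Definition mxpow (T : ringType) p (M : 'M[T]_p) (k : nat) : 'M[T]_p :=
  iter k (fun N => M *m N) 1%:M.

(* matrix entries <u| X^a Z^b |v> of the tensor product operator *)
Definition pauli (R : realType) q n (a b : word q n) (u v : word q n) : R[i] :=
  \prod_(i < n) (mxpow (Xq R q) (val (a i)) *m mxpow (Zq R q) (val (b i))) (u i) (v i).

Definition braket (R : realType) q n (phi : word q n -> R[i])
  (P : word q n -> word q n -> R[i]) (psi : word q n -> R[i]) : R[i] :=
  \sum_(u : word q n) \sum_(v : word q n) (phi u)^* * P u v * psi v.
Definition inner (R : realType) q n (phi psi : word q n -> R[i]) : R[i] :=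
  \sum_(u : word q n) (phi u)^* * psi u.

(* Main.v *)
Require Import Defs.
From mathcomp Require Import all_boot all_order all_algebra.
From mathcomp Require Import reals trigo.
From mathcomp Require Import complex.
From mathcomp Require Import ring zify.
Set Implicit Arguments. Unset Strict Implicit. Unset Printing Implicit Defensive.
Import Order.TTheory GRing.Theory Num.Theory.

Local Close Scope ring_scope.

Definition suppw q n (z : word q n) : {set 'I_n} := [set i | val (z i) != 0%N].

Lemma card_wt_eq q n (y0 : 'I_q) (hy0 : val y0 = 0%N) w :
  (#|[set z : word q n | wt z == w]| <= 'C(n, w) * (q - 1) ^ w)%N.
Proof.
rewrite -sum1_card.
rewrite (partition_big (@suppw q n) (fun S : {set 'I_n} => #|S| == w)); last first.
  by move=> z; rewrite inE.
apply: (@leq_trans (\sum_(S : {set 'I_n} | #|S| == w) (q-1)^w)%N).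
  apply: leq_sum => S /eqP HS.
  rewrite sum1_card -HS.
  have -> : (q - 1 = #|predC1 y0|)%N by rewrite cardC1 card_ord subn1.
  rewrite -(card_pffun_on y0).
  apply: subset_leq_card; apply/subsetP => z; rewrite !inE => /andP[_ /eqP <-].
  apply/pffun_onP; split.
    apply/subsetP => i; rewrite !inE => ziy0; apply: contra ziy0 => /eqP h.
    by apply/eqP/val_inj; rewrite /= h hy0.
  move=> y /imageP [] j; rewrite inE => hi ->; rewrite !inE; apply: contra hi => /eqP ->.
  by rewrite hy0.
rewrite sum_nat_const.
have -> : #|[pred S : {set 'I_n} | #|S| == w]| = #|[set S : {set 'I_n} | #|S| == w]|.
  by apply: eq_card => S; rewrite inE.
by rewrite card_draws card_ord.
Qed.

Lemma card_wt_le q n (y0 : 'I_q) (hy0 : val y0 = 0%N) r :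
  (#|[set z : word q n | wt z <= r]| <= Vq q n r)%N.
Proof.
elim: r => [|r IH].
  rewrite /Vq big_ord_recr big_ord0 /= add0n.
  have -> : [set z : word q n | wt z <= 0] = [set z : word q n | wt z == 0%N].
    by apply/setP => z; rewrite !inE leqn0.
  exact: (@card_wt_eq q n y0 hy0 0).
rewrite /Vq big_ord_recr /=.
have -> : [set z : word q n | wt z <= r.+1] =
   [set z : word q n | wt z <= r] :|: [set z : word q n | wt z == r.+1].
  by apply/setP => z; rewrite !inE leq_eqVlt ltnS orbC.
apply: leq_trans (leq_card_setU _ _) _.
by apply: leq_add; [exact: IH | exact: (@card_wt_eq q n y0 hy0 r.+1)].
Qed.

Local Open Scope ring_scope.

Lemma ker_exists (R : fieldType) p m (A : 'M[R]_(p, m)) :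
  (p < m)%N -> exists x : 'cV_m, x != 0 /\ A *m x = 0.
Proof.
move=> hpm.
set K := kermx A^T.
have rK : (0 < \rank K)%N.
  rewrite /K mxrank_ker mxrank_tr subn_gt0.
  exact: leq_ltn_trans (rank_leq_row A) hpm.
have [i hi] : exists i, row i K != 0.
  apply/existsP; apply: contraLR rK; rewrite negb_exists => /forallP h.
  have -> : K = 0.
    apply/row_matrixP => i; rewrite row0; exact/eqP/negPn/h.
  by rewrite mxrank0.
exists (row i K)^T; split.
  by rewrite trmx_eq0.
by rewrite -(trmxK A) -trmx_mul -row_mul mulmx_ker row0 trmx0.
Qed.

Local Close Scope ring_scope.

Lemma card_rowsA q n dZ (y0 : 'I_q) (hy0 : val y0 = 0%N) :
  (#|rowsA q n dZ| < 2 * Vq q n (dZ - 1))%N.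
Proof.
set T := [set z : word q n | 1 <= wt z <= dZ - 1].
set B := [set z : word q n | wt z <= dZ - 1].
have hTB : (#|T| < #|B|)%N.
  apply: proper_card; apply/properP; split.
    by apply/subsetP => z; rewrite !inE => /andP[].
  exists [ffun => y0].
    rewrite inE /wt.
    have -> : [set i | val (([ffun=> y0] : word q n) i) != 0%N] = set0.
      by apply/setP => i; rewrite !inE ffunE hy0.
    by rewrite cards0.
  rewrite inE /wt.
  have -> : [set i | val (([ffun=> y0] : word q n) i) != 0%N] = set0.
    by apply/setP => i; rewrite !inE ffunE hy0.
  by rewrite cards0.
have hB := card_wt_le n hy0 (dZ - 1).
have hsub : rowsA q n dZ \subset None |: ((fun p => Some p) @: setX T [set: bool]).
  apply/subsetP => [[[z b]|]]; rewrite !inE //= => hz.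
  apply/imsetP; exists (z, b) => //.
  by rewrite in_setX in_setT /T inE hz.
have := subset_leq_card hsub.
rewrite cardsU1 card_imset; last by move=> x y [].
rewrite cardsX cardsT card_bool.
move=> h; apply: leq_ltn_trans h _.
have : (#|T| < Vq q n (dZ - 1))%N by apply: leq_trans hTB hB.
case: (None \notin _) => /=; lia.
Qed.

Local Open Scope ring_scope.
Local Open Scope complex_scope.

Section Pauli.
Variables (R : realType) (q : nat) (hq : (0 < q)%N).

Lemma Xpow_entry a (i j : 'I_q) :
  mxpow (Xq R q) a i j = (val j == (val i + a) %% q)%N%:R.
Proof.
elim: a i j => [|a IH] i j.
  by rewrite /mxpow /= !mxE addn0 modn_small // eq_sym.
rewrite /mxpow /= -/(mxpow _ a) mxE.
rewrite (bigD1 (Ordinal (ltn_pmod (val i).+1 hq))) //= big1 ?addr0.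
  by rewrite mxE /= eqxx mul1r IH /= modnDml addSnnS.
move=> w hw; rewrite mxE.
have -> : (val w == (val i).+1 %% q)%N = false.
  by apply/negbTE; apply: contra hw => /eqP h; apply/eqP/val_inj.
by rewrite mul0r.
Qed.

Lemma Zpow_entry b (i j : 'I_q) :
  mxpow (Zq R q) b i j = (i == j)%:R * omega R q ^+ (val i * b).
Proof.
elim: b i j => [|b IH] i j.
  by rewrite /mxpow /= !mxE muln0 expr0 mulr1.
rewrite /mxpow /= -/(mxpow _ b) mxE.
rewrite (bigD1 i) //= big1 ?addr0.
  rewrite mxE IH eqxx mul1r mulnS exprD.
  by case: (i == j); rewrite ?mul0r ?mulr0 ?mul1r.
move=> w hw; rewrite mxE eq_sym (negbTE hw).
by rewrite mul0r mul0r.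
Qed.

Lemma XZ_entry a b (i j : 'I_q) :
  (mxpow (Xq R q) a *m mxpow (Zq R q) b) i j =
  (val j == (val i + a) %% q)%N%:R * omega R q ^+ (val j * b).
Proof.
rewrite mxE (bigD1 j) //= big1 ?addr0.
  by rewrite Xpow_entry Zpow_entry eqxx mul1r.
move=> w hw; rewrite Zpow_entry (negbTE hw).
by rewrite mulr0n mul0r mulr0.
Qed.

Lemma pauliE n (a b u v : word q n) :
  pauli R a b u v = \prod_(i < n)
     ((val (v i) == (val (u i) + val (a i)) %% q)%N%:R * omega R q ^+ (val (v i) * val (b i))).
Proof. by apply: eq_bigr => i _; rewrite XZ_entry. Qed.

Lemma modn_add_neq u a : (u < q)%N -> (0 < a < q)%N -> ((u + a) %% q != u)%N.
Proof.
move=> hu /andP[ha0 haq].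
case: (ltnP (u + a) q) => h.
  by rewrite modn_small //; lia.
have -> : (u + a = (u + a - q) + q)%N by lia.
by rewrite modnDr modn_small; lia.
Qed.

Lemma pauli_neq0 n (dX : nat) (a b u v : word q n) :
  (exists i, val (a i) != 0%N) -> (wt a <= dX - 1)%N -> (1 <= dX)%N ->
  (u != v -> dX <= hdist u v)%N ->
  pauli R a b u v = 0.
Proof.
move=> [i0 hi0] hwa hdX huv.
have [i hi] : exists i, val (v i) != ((val (u i) + val (a i)) %% q)%N.
  apply/existsP; apply: contraT; rewrite negb_exists => /forallP h.
  have hv : forall i, val (v i) = ((val (u i) + val (a i)) %% q)%N.
    by move=> i; apply/eqP/negPn/h.
  have huv' : u = v.
    apply/eqP; apply/negPn/negP => /huv hd.
    have : (hdist u v <= wt a)%N.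
      apply: subset_leq_card; apply/subsetP => i; rewrite !inE; apply: contra.
      move=> /eqP ha; apply/eqP/val_inj; rewrite hv ha addn0 modn_small //; exact: ltn_ord.
    lia.
  have hne := @modn_add_neq (val (v i0)) (val (a i0)) (ltn_ord _).
  move: (hv i0); rewrite huv' => h0; move: hne; rewrite -h0 eqxx; apply.
  by rewrite lt0n hi0 ltn_ord.
by rewrite pauliE (bigD1 i) //= (negbTE hi) mulr0n !mul0r.
Qed.

Lemma pauli_a0 n (a b u v : word q n) :
  (forall i, val (a i) = 0%N) ->
  pauli R a b u v = (u == v)%:R * omega R q ^+ dotw b v.
Proof.
move=> ha; rewrite pauliE.
under eq_bigr => i _ do rewrite ha addn0 (modn_small (ltn_ord (u i))).
case: (eqVneq u v) => [<-|huv].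
  rewrite mul1r /dotw -prodrXr; apply: eq_bigr => i _.
  by rewrite eqxx mul1r mulnC.
have [i hi] : exists i, u i != v i.
  apply/existsP; apply: contraR huv; rewrite negb_exists => /forallP h.
  by apply/eqP/ffunP => i; apply/eqP/negPn/h.
rewrite mul0r (bigD1 i) //=.
have -> : (val (v i) == val (u i)) = false.
  by apply/negbTE; rewrite eq_sym; apply: contra hi => /eqP h; apply/eqP/val_inj.
by rewrite !mul0r.
Qed.

End Pauli.

Section Cx.
Variable R : realType.
Lemma addCx (a b c d : R) : (a +i* b) + (c +i* d) = (a + c) +i* (b + d).
Proof. by []. Qed.
Lemma mulCx (a b c d : R) : (a +i* b) * (c +i* d) = (a * c - b * d) +i* (a * d + b * c).
Proof. by []. Qed.
Lemma realC (a : R) : a%:C = a +i* 0.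
Proof. by []. Qed.

Lemma sumC (I : finType) (f g : I -> R) :
  \sum_i (f i +i* g i) = (\sum_i f i) +i* (\sum_i g i).
Proof.
apply: (big_rec3 (fun a b c => a = b +i* c)) => // i a b0 c0 _ ->.
by rewrite addCx.
Qed.

Lemma omega_exp q N : omega R q ^+ N =
  cos (2 * pi * N%:R / q%:R) +i* sin (2 * pi * N%:R / q%:R).
Proof.
elim: N => [|N IH].
  by rewrite expr0 mulr0 mul0r cos0 sin0.
have e : 2 * pi * (N.+1)%:R / q%:R = 2 * pi * N%:R / q%:R + 2 * pi / q%:R :> R.
  by rewrite (mulrSr 1 N); ring.
rewrite exprSr IH /omega mulCx e cosD sinD.
by congr (_ +i* _); rewrite addrC.
Qed.
Lemma realC_sum (I : Type) (r : seq I) (P : pred I) (f : I -> R) :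
  (\sum_(i <- r | P i) f i)%:C = \sum_(i <- r | P i) (f i)%:C.
Proof.
elim: r => [|y r IH]; first by rewrite !big_nil.
rewrite !big_cons; case: (P y) => //.
by rewrite -IH !realC addCx addr0.
Qed.

Lemma realC_mul (a b : R) : (a * b)%:C = a%:C * b%:C.
Proof. by rewrite !realC mulCx !mul0r !mulr0 subr0 addr0. Qed.

Lemma realC_bmul (b : bool) (r : R) : ((b%:R * r)%:C) = b%:R * r%:C.
Proof. by case: b; rewrite ?mul1r ?mul0r. Qed.
Lemma conjR (r : R) : Num.conj (r%:C) = r%:C.
Proof. by apply: conj_Creal; rewrite complex_real. Qed.
End Cx.

Section Ket.
Variables (R : realType) (q n m : nat) (c : 'I_m -> word q n) (hc : injective c)
  (x : 'cV[R]_m).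

Definition tt (b : bool) k := if b then xneg x k else xpos x k.
Definition ss b k := Num.sqrt (tt b k) / Num.sqrt (xsum x).

Lemma ketE b w : ketL c x b w = (\sum_k (c k == w)%:R * ss b k)%:C.
Proof.
rewrite /ketL realC_sum; apply: eq_bigr => k _.
by rewrite realC_bmul.
Qed.

Lemma ket_ck b k : ketL c x b (c k) = (ss b k)%:C.
Proof.
rewrite ketE (bigD1 k) //= eqxx mul1r big1 ?addr0 // => l hl.
by rewrite (inj_eq hc) (negbTE hl) mul0r.
Qed.

Lemma sumR (G : word q n -> R[i]) b :
  \sum_v G v * ketL c x b v = \sum_l G (c l) * (ss b l)%:C.
Proof.
under eq_bigr => v _ do rewrite ketE realC_sum big_distrr /=.
rewrite exchange_big /=; apply: eq_bigr => l _.
rewrite (bigD1 (c l)) //= eqxx realC_bmul mul1r big1 ?addr0 // => v hv.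
by rewrite eq_sym (negbTE hv) realC_bmul mul0r mulr0.
Qed.

Lemma sumL (G : word q n -> R[i]) b :
  \sum_u (ketL c x b u)^* * G u = \sum_k (ss b k)%:C * G (c k).
Proof.
under eq_bigr => v _ do rewrite ketE conjR realC_sum big_distrl /=.
rewrite exchange_big /=; apply: eq_bigr => l _.
rewrite (bigD1 (c l)) //= eqxx realC_bmul mul1r big1 ?addr0 // => v hv.
by rewrite eq_sym (negbTE hv) realC_bmul mul0r mul0r.
Qed.

Lemma braketE i j (P : word q n -> word q n -> R[i]) :
  braket (ketL c x i) P (ketL c x j) =
  \sum_k (ss i k)%:C * \sum_l P (c k) (c l) * (ss j l)%:C.
Proof.
rewrite /braket.
transitivity (\sum_u (ketL c x i u)^* * \sum_v P u v * ketL c x j v).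
  by apply: eq_bigr => u _; rewrite big_distrr; apply: eq_bigr => v _; exact: (esym (mulrA _ _ _)).
rewrite (eq_bigr (fun u => (ketL c x i u)^* * \sum_l P u (c l) * (ss j l)%:C)).
  by rewrite sumL.
by move=> u _; rewrite sumR.
Qed.

Lemma innerE i j :
  inner (ketL c x i) (ketL c x j) = \sum_k (ss i k * ss j k)%:C.
Proof.
rewrite /inner sumL; apply: eq_bigr => k _.
by rewrite ket_ck // (realC_mul (ss i k)).
Qed.

Lemma xpos_ge0 k : 0 <= xpos x k.
Proof. by rewrite /xpos le_max lexx orbT. Qed.
Lemma xneg_ge0 k : 0 <= xneg x k.
Proof. by rewrite /xneg le_max lexx orbT. Qed.
Lemma tt_ge0 b k : 0 <= tt b k.
Proof. by case: b; rewrite /tt ?xpos_ge0 ?xneg_ge0. Qed.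
Lemma xsum_ge0 : 0 <= xsum x.
Proof. by apply: sumr_ge0 => k _; exact: xpos_ge0. Qed.

Lemma xposneg k : xpos x k = 0 \/ xneg x k = 0.
Proof.
rewrite /xpos /xneg; case: (lerP 0 (x k 0)) => h.
  by right; rewrite max_r // oppr_le0.
by left.
Qed.

Lemma xposBneg k : xpos x k - xneg x k = x k 0.
Proof.
rewrite /xpos /xneg; case: (lerP 0 (x k 0)) => h.
  by rewrite max_r ?subr0 // oppr_le0.
by rewrite max_l ?sub0r ?opprK // oppr_ge0 ltW.
Qed.

Lemma ss_mul i j k : ss i k * ss j k = (i == j)%:R * (tt i k / xsum x).
Proof.
rewrite /ss.
case: (eqVneq i j) => [<-|hij].
  rewrite mul1r -expr2 expr_div_n !sqr_sqrtr //; [exact: xsum_ge0 | exact: tt_ge0].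
rewrite mul0r.
have : tt i k = 0 \/ tt j k = 0.
  by case: i j hij => [] [] //= _; rewrite /tt; case: (xposneg k); auto.
by case=> ->; rewrite sqrtr0 ?mul0r ?mulr0.
Qed.

End Ket.

Section Kernel.
Variables (R : realType) (q n dZ m : nat) (c : 'I_m -> word q n) (x : 'cV[R]_m)
  (hA : Amx R dZ c *m x = 0).

Lemma row_eq r : r \in rowsA q n dZ -> \sum_k Aentry R c r k * x k 0 = 0.
Proof.
move=> hr; move/matrixP: hA => /(_ (enum_rank_in hr r) 0).
rewrite !mxE => h; apply: etrans h; apply: eq_bigr => k _.
by rewrite mxE (enum_rankK_in hr hr).
Qed.

Lemma sum_x0 : \sum_k x k 0 = 0.
Proof.
have hN : (None : rowlab q n) \in rowsA q n dZ by rewrite inE.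
have := row_eq hN; rewrite /Aentry.
by under eq_bigr do rewrite mul1r.
Qed.

Lemma sum_omega b : (wt b <= dZ - 1)%N ->
  \sum_k (x k 0)%:C * omega R q ^+ dotw b (c k) = 0.
Proof.
move=> hb; case: (posnP (wt b)) => hw.
  have hb0 : forall i, val (b i) = 0%N.
    move=> i; have := cards0_eq hw; move/setP/(_ i); rewrite !inE.
    by move/negbFE/eqP.
  have hd : forall v, dotw b v = 0%N.
    by move=> v; rewrite /dotw big1 // => i _; rewrite hb0.
  under eq_bigr do rewrite hd expr0 mulr1.
  by rewrite -realC_sum sum_x0.
have hs : forall b', Some (b, b') \in rowsA q n dZ by move=> b'; rewrite inE /= hw hb.
have h1 := row_eq (hs false); have h2 := row_eq (hs true).
rewrite /Aentry /= in h1 h2.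
rewrite (eq_bigr (fun k => (cos (2 * pi * (dotw b (c k))%:R / q%:R) * x k 0) +i*
                           (sin (2 * pi * (dotw b (c k))%:R / q%:R) * x k 0))).
  by rewrite sumC h1 h2.
move=> k _; rewrite omega_exp realC mulCx.
by congr (_ +i* _); ring.
Qed.

Lemma sum_neg : \sum_k xneg x k = xsum x.
Proof.
have : \sum_k (xpos x k - xneg x k) = 0.
  by apply: etrans sum_x0; apply: eq_bigr => k _; rewrite xposBneg.
rewrite sumrB => /eqP; rewrite subr_eq0 => /eqP <-.
by [].
Qed.

Lemma xsum_pos : x != 0 -> 0 < xsum x.
Proof.
move=> hx0; rewrite lt_def xsum_ge0 andbT; apply: contra hx0 => /eqP h.
have hp := psumr_eq0P (fun k _ => xpos_ge0 x k) h.
have h' : \sum_k xneg x k = 0 by rewrite sum_neg.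
have hn := psumr_eq0P (fun k _ => xneg_ge0 x k) h'.
by apply/eqP/matrixP => k j; rewrite (ord1 j) mxE -xposBneg hp // hn // subr0.
Qed.

Lemma sumtt b : \sum_k tt x b k = xsum x.
Proof. by case: b; rewrite /tt ?sum_neg. Qed.

End Kernel.

Lemma realC_sub (R : realType) (a b : R) : (a - b)%:C = a%:C - b%:C.
Proof. by rewrite rmorphB. Qed.

Theorem lemma2 (R : realType) (q n dX dZ : nat)
  (hq : (2 <= q)%N) (hn : (1 <= n)%N) (hdX : (1 <= dX)%N) (hdZ : (1 <= dZ)%N)
  (C : {set word q n})
  (hdist_C : forall u v, u \in C -> v \in C -> u != v -> (dX <= hdist u v)%N)
  (hcard : (2 * Vq q n (dZ - 1) <= #|C|)%N)
  (m : nat) (c : 'I_m -> word q n) (hc_inj : injective c)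
  (hc_onto : forall w, w \in C <-> exists k, c k = w) :
  (exists x : 'cV[R]_m, x != 0 /\ Amx R dZ c *m x = 0) /\
  (forall x : 'cV[R]_m, x != 0 -> Amx R dZ c *m x = 0 ->
     (forall i j : bool, inner (ketL c x i) (ketL c x j) = (i == j)%:R) /\
     (forall (i : bool) w, ketL c x i w != 0 -> w \in C) /\
     (forall w, ketL c x false w = 0 \/ ketL c x true w = 0) /\
     (forall a b : word q n, (wt a <= dX - 1)%N -> (wt b <= dZ - 1)%N ->
        exists cP : R[i], forall i j : bool,
          braket (ketL c x i) (pauli R a b) (ketL c x j) = cP * (i == j)%:R)).
Proof.
have hq0 : (0 < q)%N by apply: leq_trans hq.
pose y0 : 'I_q := Ordinal hq0.
have hy0 : val y0 = 0%N by [].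
have hcC : forall k, c k \in C by move=> k; apply/hc_onto; exists k.
have hCm : #|C| = m.
  have -> : C = c @: setT.
    apply/setP => w; apply/idP/imsetP.
      by move/hc_onto => [k <-]; exists k.
    by move=> [k _ ->].
  by rewrite card_imset // cardsT card_ord.
split.
  apply: ker_exists.
  have := card_rowsA n dZ hy0; rewrite -hCm => h.
  by apply: leq_trans h hcard.
move=> x hx0 hA.
have hX := xsum_pos hA hx0.
have hX0 : xsum x != 0 by rewrite gt_eqF.
split.
  move=> i j; rewrite innerE //.
  transitivity (((i == j)%:R * ((\sum_k tt x i k) / xsum x))%:C).
    rewrite mulr_suml mulr_sumr realC_sum; apply: eq_bigr => k _.
    by rewrite ss_mul.
  rewrite (sumtt hA) divff // mulr1.
  by case: (i == j).
split.
  move=> i w; apply: contraR => hw; apply/eqP.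
  rewrite ketE big1 // => k _.
  have : c k != w by apply: contra hw => /eqP <-.
  by move/negbTE => ->; rewrite mul0r.
split.
  move=> w; case: (pickP (fun k => c k == w)) => [k /eqP <- | hnone].
    rewrite !ket_ck //; case: (xposneg x k) => h; [left|right];
      by rewrite /ss /tt h sqrtr0 mul0r.
  left; rewrite ketE big1 // => k _.
  by rewrite hnone mul0r.
move=> a b ha hb.
case: (boolP [exists i, val (a i) != 0%N]) => [/existsP ha0 | ha0].
  have hP : forall k l, pauli R a b (c k) (c l) = 0.
    move=> k l; apply: (@pauli_neq0 R q hq0 n dX) => // hne.
    by apply: hdist_C.
  exists 0 => i j; rewrite braketE // big1 ?mul0r // => k _.
  by rewrite big1 ?mulr0 // => l _; rewrite hP mul0r.
have ha00 : forall i, val (a i) = 0%N.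
  move=> i; move: ha0; rewrite negb_exists => /forallP /(_ i).
  by move/negPn/eqP.
have hP : forall k l, pauli R a b (c k) (c l) =
    (k == l)%:R * omega R q ^+ dotw b (c l).
  by move=> k l; rewrite pauli_a0 // (inj_eq hc_inj).
exists (\sum_k (xpos x k / xsum x)%:C * omega R q ^+ dotw b (c k)) => i j.
rewrite braketE //.
rewrite (eq_bigr (fun k => ((i == j)%:R * (tt x i k / xsum x))%:C
                           * omega R q ^+ dotw b (c k))); last first.
  move=> k _.
  rewrite (bigD1 k) //= hP eqxx mul1r big1 ?addr0; last first.
    by move=> l hl; rewrite hP eq_sym (negbTE hl) !mul0r.
  by rewrite [omega R q ^+ _ * _]mulrC [LHS]mulrA -(realC_mul (ss x i k)) ss_mul.
have hs := sum_omega hA hb.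
case: i; case: j => /=.
- rewrite mulr1.
  rewrite (eq_bigr (fun k => (xpos x k / xsum x)%:C * omega R q ^+ dotw b (c k) -
     ((xsum x)^-1)%:C * ((x k 0)%:C * omega R q ^+ dotw b (c k)))).
    by rewrite sumrB -mulr_sumr hs mulr0 subr0.
  move=> k _; rewrite [((xsum x)^-1)%:C * _]mulrA -(realC_mul (xsum x)^-1) -mulrBl -realC_sub.
  congr (_%:C * _); rewrite -(xposBneg x k) /tt; ring.
- by rewrite mulr0 big1 // => k _; rewrite mul0r mul0r.
- by rewrite mulr0 big1 // => k _; rewrite mul0r mul0r.
- by rewrite mulr1; apply: eq_bigr => k _; rewrite mul1r.
Qed.
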